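(* Let $u:\mathbb{R}^n\supseteq\bigcup_{l}P_l\to\mathbb{R}^m$ be a continuous piecewise affine function with $u(z)=F_lz+G_l$ for $z\in P_l$, $l=1,\dots,n_r$, where $F_l\in\mathbb{R}^{m\times n}$, $G_l\in\mathbb{R}^m$ and $P_l=\{z\in\mathbb{R}^n: H_lz\le K_l\}$ are polyhedra. Let $i\neq j$ and let the hyperplane $hz=k$ ($h\in\mathbb{R}^{1\times n}\setminus\{0\}$, $k\in\mathbb{R}$) border $P_i$ and $P_j$, with $hz\le k$ for $z\in P_j$ and $hz\ge k$ for $z\in P_i$. Let $\epsilon\ge0$ and let the quantized data be $\hat F_i=F_i+\Delta F_i$, $\hat G_i=G_i+\Delta G_i$, $\hat h=h+\Delta h$, $\hat k=k+\Delta k$, $\hat x=x+\Delta x$, where every entry of $\Delta F_i,\Delta G_i,\Delta h,\Delta k,\Delta x$ has absolute value at most $\epsilon$. Let $x\in P_j$, suppose the orthogonal projection $x_p$ of $x$ onto the hyperplane $\{z:hz=k\}$ lies in $P_i\cap P_j$ (the common facet), and suppose $\hat h\hat x\ge\hat k$ (the quantized state lies on the $\hat P_i$ side of the quantized hyperplane), with the quantized control given by $\hat u(\hat x)=\hat F_i\hat x+\hat G_i$. Then, with $\delta=\epsilon(\|h\|_1+\|x\|_1+n\epsilon+1)$, $$\|\hat u(\hat x)-u(x)\|_\infty\le \frac{\delta}{\|h\|_2^2}\,\|(F_i-F_j)h'\|_\infty+\|F_i\Delta x+\Delta F_ix+\Delta F_i\Delta x+\Delta G_i\|_\infty,$$ and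 moreover $$\|F_i\Delta x+\Delta F_ix+\Delta F_i\Delta x+\Delta G_i\|_\infty\le \|\Delta F_i\|_\infty\|x\|_\infty+\|\Delta G_i\|_\infty+\|\hat F_i\|_\infty\,\epsilon \quad\text{(a posteriori bound)},$$ as well as $$\|F_i\Delta x+\Delta F_ix+\Delta F_i\Delta x+\Delta G_i\|_\infty\le \epsilon\left(\|F_i\|_\infty+n\|x\|_\infty+n\epsilon+1\right)\quad\text{(a priori bound)}.$$
   Context: $h'$ denotes the transpose of $h$. For vectors, $\|\cdot\|_1,\|\cdot\|_2,\|\cdot\|_\infty$ are the usual $1$-, $2$-, $\infty$-norms; for a matrix $M$, $\|M\|_\infty$ is the induced $\infty$-norm (maximum absolute row sum). Here $u(x)=F_jx+G_j$ is the exact control (explicit MPC feedback law) at the true state $x\in P_j$, and $\hat u(\hat x)$ is the control computed by the controller from quantized data, in which the quantized state is located in the quantized region $\hat P_i$. Continuity of $u$ means $F_iz+G_i=F_jz+G_j$ for all $z\in P_i\cap P_j$. *)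

(* Defs.v *)
From HB Require Import structures.
From mathcomp Require Import all_boot all_order all_algebra.
Set Implicit Arguments. Unset Strict Implicit. Unset Printing Implicit Defensive.
Import Order.TTheory GRing.Theory Num.Theory.
Local Open Scope ring_scope.

Definition vnorm1 {R : realFieldType} {n : nat} (v : 'cV[R]_n) : R :=
  \sum_(i < n) `|v i 0|.
Definition rnorm1 {R : realFieldType} {n : nat} (v : 'rV[R]_n) : R :=
  \sum_(j < n) `|v 0 j|.
(* infinity-norm of a column vector (max abs entry; 0 for the empty vector) *)
Definition vnormInf {R : realFieldType} {n : nat} (v : 'cV[R]_n) : R :=
  \big[Num.max/0]_(i < n) `|v i 0|.
(* induced infinity-norm of a matrix: maximum absolute row sum *)
Definition mnormInf {R : realFieldType} {m n : nat} (M : 'M[R]_(m, n)) : R :=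
  \big[Num.max/0]_(i < m) \sum_(j < n) `|M i j|.
Definition rnorm2sq {R : realFieldType} {n : nat} (h : 'rV[R]_n) : R :=
  \sum_(j < n) h 0 j ^+ 2.

Definition dotrc {R : realFieldType} {n : nat} (h : 'rV[R]_n) (z : 'cV[R]_n) : R :=
  (h *m z) 0 0.

Definition in_poly {R : realFieldType} {n p : nat}
  (H : 'M[R]_(p, n)) (K : 'cV[R]_p) (z : 'cV[R]_n) : Prop :=
  forall r : 'I_p, (H *m z) r 0 <= K r 0.

Definition proj_hyp {R : realFieldType} {n : nat}
  (h : 'rV[R]_n) (k : R) (x : 'cV[R]_n) : 'cV[R]_n :=
  x - ((dotrc h x - k) / rnorm2sq h) *: h^T.

(* Main.v *)
Require Import Defs.
From HB Require Import structures.
From mathcomp Require Import all_boot all_order all_algebra.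
From mathcomp Require Import ring lra.
Import Order.TTheory GRing.Theory Num.Theory.
Local Open Scope ring_scope.

Section H.
Set Implicit Arguments.
Context {R : realFieldType}.

Lemma vnormInf_le n (v : 'cV[R]_n) c : 0 <= c -> (forall a, `|v a 0| <= c) -> vnormInf v <= c.
Proof. by move=> c0 hv; rewrite /vnormInf; apply: (big_ind (fun y => y <= c)) => // *; rewrite ge_max; apply/andP. Qed.

Lemma le_vnormInf n (v : 'cV[R]_n) a : `|v a 0| <= vnormInf v.
Proof. by rewrite /vnormInf (bigD1 a) //= le_max lexx. Qed.

Lemma vnormInf_ge0 n (v : 'cV[R]_n) : 0 <= vnormInf v.
Proof. by rewrite /vnormInf; apply: (big_ind (fun y => 0 <= y)) => // *; rewrite le_max; apply/orP; left. Qed.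

Lemma le_mnormInf m n (M : 'M[R]_(m, n)) a : \sum_j `|M a j| <= mnormInf M.
Proof. by rewrite /mnormInf (bigD1 a) //= le_max lexx. Qed.

Lemma mulmx_entry m n (M : 'M[R]_(m, n)) (v : 'cV[R]_n) a :
  `|(M *m v) a 0| <= (\sum_j `|M a j|) * vnormInf v.
Proof.
rewrite !mxE mulr_suml; apply: le_trans; first exact: ler_norm_sum.
apply: ler_sum => j _; rewrite normrM; apply: ler_wpM2l => //; exact: le_vnormInf.
Qed.

Lemma rowsum_bound m n (M : 'M[R]_(m, n)) a e : (forall b, `|M a b| <= e) ->
  \sum_j `|M a j| <= n%:R * e.
Proof.
move=> hb; apply: (@le_trans _ _ (\sum_(j < n) e)).
  by apply: ler_sum => j _.
by rewrite sumr_const card_ord mulr_natl.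
Qed.

Lemma mulmx_vnorm m n (M : 'M[R]_(m, n)) (v : 'cV[R]_n) a :
  `|(M *m v) a 0| <= mnormInf M * vnormInf v.
Proof.
apply: le_trans; first exact: mulmx_entry.
apply: ler_wpM2r; [exact: vnormInf_ge0 | exact: le_mnormInf].
Qed.

Lemma dot_bound n (h : 'rV[R]_n) (v : 'cV[R]_n) :
  `|dotrc h v| <= \sum_j `|h 0 j| * `|v j 0|.
Proof.
rewrite /dotrc !mxE; apply: le_trans; first exact: ler_norm_sum.
by apply: ler_sum => j _; rewrite normrM.
Qed.

Lemma rnorm2sq_gt0 n (h : 'rV[R]_n) : h != 0 -> 0 < rnorm2sq h.
Proof.
move=> hn; rewrite lt_def; apply/andP; split; last first.
  by rewrite /rnorm2sq sumr_ge0 // => j _; rewrite sqr_ge0.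
apply/eqP => h0; move/eqP: hn; apply; apply/matrixP => a b.
rewrite (ord1 a) mxE.
have := @psumr_eq0P _ _ xpredT (fun j => h 0 j ^+ 2) (fun j _ => sqr_ge0 (h 0 j)) h0 b isT.
by move=> /eqP; rewrite sqrf_eq0 => /eqP ->.
Qed.
Lemma mnormInf_ge0 m n (M : 'M[R]_(m, n)) : 0 <= mnormInf M.
Proof. rewrite /mnormInf; apply: (big_rec (fun y => 0 <= y)); first exact: lexx. move=> a y _ hy; rewrite le_max hy orbT. done. Qed.


Lemma entry_bound m (c d : R) (W E : 'cV[R]_m) a : `|c| <= d ->
  `|(c *: W + E) a 0| <= d * vnormInf W + vnormInf E.
Proof.
move=> hc; rewrite !mxE.
apply: le_trans; first exact: ler_normD.
apply: lerD; last exact: le_vnormInf.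
rewrite normrM; apply: ler_pM => //; exact: le_vnormInf.
Qed.
Lemma entry4 m (A B C D : 'cV[R]_m) a : (A + B + C + D) a 0 = A a 0 + B a 0 + C a 0 + D a 0.
Proof. by rewrite !mxE. Qed.
Lemma entry2 m (A B : 'cV[R]_m) a : (A + B) a 0 = A a 0 + B a 0.
Proof. by rewrite !mxE. Qed.
End H.

Lemma norm4 (R : realFieldType) (a b c d : R) : `|a + b + c + d| <= `|a| + `|b| + `|c| + `|d|.
Proof.
apply: le_trans; first exact: ler_normD. rewrite lerD2r.
apply: le_trans; first exact: ler_normD. rewrite lerD2r.
exact: ler_normD.
Qed.

Theorem theorem1 (R : realFieldType) (n m nr : nat)
  (p : 'I_nr -> nat)
  (H : forall l : 'I_nr, 'M[R]_(p l, n)) (K : forall l : 'I_nr, 'cV[R]_(p l))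
  (F : 'I_nr -> 'M[R]_(m, n)) (G : 'I_nr -> 'cV[R]_m)
  (u : 'cV[R]_n -> 'cV[R]_m)
  (hu : forall (l : 'I_nr) (z : 'cV[R]_n), in_poly (H l) (K l) z ->
          u z = F l *m z + G l)
  (hcont : forall (l1 l2 : 'I_nr) (z : 'cV[R]_n),
          in_poly (H l1) (K l1) z -> in_poly (H l2) (K l2) z ->
          F l1 *m z + G l1 = F l2 *m z + G l2)
  (i j : 'I_nr) (hij : i != j)
  (h : 'rV[R]_n) (k : R) (hh0 : h != 0)
  (hPj : forall z, in_poly (H j) (K j) z -> dotrc h z <= k)
  (hPi : forall z, in_poly (H i) (K i) z -> k <= dotrc h z)
  (eps : R) (heps : 0 <= eps)
  (dF : 'M[R]_(m, n)) (dG : 'cV[R]_m) (dh : 'rV[R]_n) (dk : R) (dx : 'cV[R]_n)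
  (hdF : forall a b, `|dF a b| <= eps) (hdG : forall a, `|dG a 0| <= eps)
  (hdh : forall b, `|dh 0 b| <= eps) (hdk : `|dk| <= eps)
  (hdx : forall b, `|dx b 0| <= eps)
  (x : 'cV[R]_n) (hx : in_poly (H j) (K j) x)
  (hxpi : in_poly (H i) (K i) (proj_hyp h k x))
  (hxpj : in_poly (H j) (K j) (proj_hyp h k x))
  (hside : k + dk <= dotrc (h + dh) (x + dx)) :
  let Fhat := F i + dF in
  let Ghat := G i + dG in
  let xhat := x + dx in
  let uhat := Fhat *m xhat + Ghat in
  let delta := eps * (rnorm1 h + vnorm1 x + n%:R * eps + 1) in
  let E := F i *m dx + dF *m x + dF *m dx + dG in
  [/\ vnormInf (uhat - u x) <=
        delta / rnorm2sq h * vnormInf ((F i - F j) *m h^T) + vnormInf E,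
      vnormInf E <= mnormInf dF * vnormInf x + vnormInf dG + mnormInf Fhat * eps
    & vnormInf E <= eps * (mnormInf (F i) + n%:R * vnormInf x + n%:R * eps + 1)].
Proof.
move=> Fhat Ghat xhat uhat delta E.
have hux : u x = F j *m x + G j := hu j x hx.
set c := (dotrc h x - k) / rnorm2sq h.
have hc := hcont i j _ hxpi hxpj.
have ex : x = proj_hyp h k x + c *: h^T by rewrite /proj_hyp subrK.
move: hc ex; generalize (proj_hyp h k x) => xp hc ex.
have e1 : F i *m x + G i - (F j *m x + G j) = c *: ((F i - F j) *m h^T).
  rewrite [in F i *m x]ex [in F j *m x]ex !mulmxDr -!scalemxAr mulmxBl scalerBr.
  move: hc; generalize (F i *m xp) (F j *m xp) (F i *m h^T) (F j *m h^T) => A B C D hc.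
  apply/matrixP=> a b; move/matrixP: hc => /(_ a b); rewrite !mxE => hc; lra.
have key : uhat - u x = c *: ((F i - F j) *m h^T) + E.
  rewrite -e1 hux /uhat /Fhat /Ghat /xhat /E mulmxDl !mulmxDr.
  generalize (F i *m x) (F j *m x) (F i *m dx) (dF *m x) (dF *m dx) => A B C D D'.
  apply/matrixP=> a b; rewrite !mxE; lra.
have r0 := rnorm2sq_gt0 _ hh0.
have vdx : vnormInf dx <= eps by apply: vnormInf_le.
have b1 : `|dotrc h dx| <= rnorm1 h * eps.
  apply: le_trans; first exact: dot_bound.
  rewrite /rnorm1 mulr_suml; apply: ler_sum => b _; exact: ler_wpM2l.
have b2 : `|dotrc dh x| <= eps * vnorm1 x.
  apply: le_trans; first exact: dot_bound.
  rewrite /vnorm1 mulr_sumr; apply: ler_sum => b _; exact: ler_wpM2r.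
have b3 : `|dotrc dh dx| <= n%:R * eps * eps.
  apply: le_trans; first exact: dot_bound.
  apply: (@le_trans _ _ (\sum_(b < n) (eps * eps))).
    by apply: ler_sum => b _; apply: ler_pM.
  by rewrite sumr_const card_ord mulr_natl mulrnAl.
have dexp : dotrc (h + dh) (x + dx) = dotrc h x + dotrc h dx + dotrc dh x + dotrc dh dx.
  by rewrite /dotrc mulmxDl !mulmxDr !mxE; ring.
have hxk := hPj x hx.
have hnx : 0 <= vnorm1 x by rewrite /vnorm1 sumr_ge0.
have hnh : 0 <= rnorm1 h by rewrite /rnorm1 sumr_ge0.
have dd : `|dotrc h x - k| <= delta.
  rewrite ler0_norm ?subr_le0 //.
  have n1 : forall t : R, - t <= `|t| by move=> t; rewrite -normrN ler_norm.
  have := ler_norm (dotrc h dx); have := ler_norm (dotrc dh x); have := ler_norm (dotrc dh dx); have := n1 dk.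
  have -> : delta = rnorm1 h * eps + eps * vnorm1 x + n%:R * eps * eps + eps by rewrite /delta; ring.
  move: b1 b2 b3 hdk hside hxk; rewrite dexp.
  generalize (rnorm1 h * eps) (eps * vnorm1 x) (n%:R * eps * eps) => P Q S.
  generalize (`|dotrc h dx|) (`|dotrc dh x|) (`|dotrc dh dx|) (`|dk|) (dotrc h dx) (dotrc dh x) (dotrc dh dx) (dotrc h x) => a1 a2 a3 a4 a5 a6 a7 a8 q1 q2 q3 q4 q5 q6 q7 q8 q9 q10; lra.
have hd0 : 0 <= delta by apply: le_trans dd.
have hcd : `|c| <= delta / rnorm2sq h.
  rewrite /c normrM normfV (gtr0_norm r0); apply: ler_wpM2r => //.
  by rewrite invr_ge0 ltW.
have vE0 : 0 <= vnormInf E by apply: vnormInf_ge0.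
split.
- rewrite key; apply: vnormInf_le.
    by rewrite addr_ge0 // mulr_ge0 ?vnormInf_ge0 // divr_ge0 // ltW.
  move=> a; exact: entry_bound.
- apply: vnormInf_le.
    by apply: addr_ge0; [apply: addr_ge0; [apply: mulr_ge0|] |apply: mulr_ge0]; rewrite ?vnormInf_ge0 ?mnormInf_ge0.
  move=> a.
  have eF : (Fhat *m dx) a 0 = (F i *m dx) a 0 + (dF *m dx) a 0 by rewrite mulmxDl entry2.
  have t1 := mulmx_vnorm Fhat dx a.
  have t2 := mulmx_vnorm dF x a.
  have t3 := le_vnormInf dG a.
  have t1' : mnormInf Fhat * vnormInf dx <= mnormInf Fhat * eps by apply: ler_wpM2l => //; exact: mnormInf_ge0.
  have tri : `|E a 0| <= `|(Fhat *m dx) a 0| + `|(dF *m x) a 0| + `|dG a 0|.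
    rewrite eF /E entry4.
    have -> : (F i *m dx) a 0 + (dF *m x) a 0 + (dF *m dx) a 0 + dG a 0 =
       ((F i *m dx) a 0 + (dF *m dx) a 0) + (dF *m x) a 0 + dG a 0 by ring.
    apply: le_trans; first exact: ler_normD. rewrite lerD2r. exact: ler_normD.
  lra.
- apply: vnormInf_le.
    by rewrite mulr_ge0 // !addr_ge0 ?mulr_ge0 ?vnormInf_ge0 ?mnormInf_ge0 ?ler0n.
  move=> a; rewrite /E entry4.
  have t1 := mulmx_vnorm (F i) dx a.
  have t1' : mnormInf (F i) * vnormInf dx <= mnormInf (F i) * eps by apply: ler_wpM2l => //; exact: mnormInf_ge0.
  have rs := rowsum_bound dF a eps (hdF a).
  have t2 := mulmx_entry dF x a.
  have t2' : (\sum_j `|dF a j|) * vnormInf x <= n%:R * eps * vnormInf x by apply: ler_wpM2r => //; exact: vnormInf_ge0.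
  have t3 := mulmx_entry dF dx a.
  have t3' : (\sum_j `|dF a j|) * vnormInf dx <= n%:R * eps * eps.
    apply: ler_pM => //; [exact: sumr_ge0 | exact: vnormInf_ge0].
  have t4 := hdG a.
  have := @norm4 R ((F i *m dx) a 0) ((dF *m x) a 0) ((dF *m dx) a 0) (dG a 0).
  lra.
Qed.
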